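(* Let $G$ be a finite simple $d$-regular graph on $2n$ vertices ($d\ge 1$) that contains at least one perfect matching. Choose edges of $G$ one at a time in a uniformly random order (without repetition), stopping as soon as every vertex has degree at least one; call the resulting random graph $G_\omega$. Then $$\mathbb{E}\left(\frac{\#\{\text{perfect matchings of } G \text{ contained in } G_\omega\}}{\#\{\text{perfect matchings of } G\}}\right) = \frac{2}{\binom{n+d-1}{n}} - \frac{1}{\binom{n+2d-2}{n}}.$$
   Context: Precisely: a uniformly random ordering $(e_1,\dots,e_m)$ of the $m$ edges of $G$ is chosen, $k$ is the least index such that the graph on $V(G)$ with edges $e_1,\dots,e_k$ has no isolated vertex, and $G_\omega$ is that graph. A perfect matching is a set of edges such that every vertex lies in exactly one of them. *)

(* Defs.v *)
From mathcomp Require Import all_boot all_order all_algebra.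
Set Implicit Arguments. Unset Strict Implicit. Unset Printing Implicit Defensive.
Import GRing.Theory Num.Theory.

Section Graphs.
Variable T : finType.

Definition simple_graph (e : rel T) : Prop := symmetric e /\ irreflexive e.

Definition regular (e : rel T) (d : nat) : Prop :=
  forall x : T, #|[set y | e x y]| = d.

Definition edges (e : rel T) : {set {set T}} :=
  [set [set x; y] | x in T, y in T & e x y].

Definition covers (S : {set {set T}}) : bool :=
  [forall x : T, [exists f in S, x \in f]].

Definition perfect_matching (e : rel T) (M : {set {set T}}) : bool :=
  (M \subset edges e) && [forall x : T, #|[set f in M | x \in f]| == 1].

Definition perfect_matchings (e : rel T) : {set {set {set T}}} :=
  [set M | perfect_matching e M].

(* An ordering of the m = |E(G)| edges: a bijection 'I_m -> E(G), given as an
   injective finite function with values in E(G). *)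
Definition orderings (e : rel T) : {set {ffun 'I_#|edges e| -> {set T}}} :=
  [set o : {ffun 'I_#|edges e| -> {set T}} | injectiveb o & [forall i, o i \in edges e]].

Definition prefix (e : rel T) (o : {ffun 'I_#|edges e| -> {set T}}) (k : nat)
  : {set {set T}} := [set o i | i : 'I_#|edges e| & (i < k)%N].

Definition stop_index (e : rel T) (o : {ffun 'I_#|edges e| -> {set T}}) : nat :=
  find (fun k => covers (prefix o k)) (iota 0 (#|edges e|).+1).

Definition G_omega (e : rel T) (o : {ffun 'I_#|edges e| -> {set T}}) : {set {set T}} :=
  prefix o (stop_index o).

Definition pm_fraction (e : rel T) (o : {ffun 'I_#|edges e| -> {set T}}) : rat :=
  (#|[set M in perfect_matchings e | M \subset G_omega o]|%:R
   / #|perfect_matchings e|%:R)%R.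

Definition expected_pm_fraction (e : rel T) : rat :=
  ((#|orderings e|%:R)^-1 * \sum_(o in orderings e) pm_fraction o)%R.

End Graphs.

(* Main.v *)
Require Import Defs.
From mathcomp Require Import all_boot all_order all_algebra.
Set Implicit Arguments. Unset Strict Implicit. Unset Printing Implicit Defensive.
Import GRing.Theory Num.Theory.
Local Open Scope ring_scope.
From mathcomp Require Import ring lra zify.

Lemma fact_neq0 n : (n`!%:R : rat) != 0.
Proof. by rewrite pnatr_eq0 -lt0n fact_gt0. Qed.

Ltac nz := repeat (apply/andP; split); 
  rewrite ?fact_neq0 //; rewrite ?(nat1r, natr1, natrD, addrA, addnS) //;
  rewrite -?natrD ?nat1r ?natr1 -?natrD ?pnatr_eq0 //.

Lemma factor_id (m l k : nat) :
  ((if l == 0%N then m`!%:R else 0) - m`!%:R * l`!%:R * k`!%:R / (l + k).+1`!%:R) * 1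
  + (m`!%:R * l.-1`!%:R * k`!%:R / (l.-1 + k).+1`!%:R - m`!%:R * l`!%:R * k`!%:R / (l + k).+1`!%:R) * l%:R
  - m`!%:R * l`!%:R * k`!%:R / (l + k).+1`!%:R * k%:R
  + m`!%:R * l`!%:R * k`!%:R / (l + k).+1`!%:R * m.+1%:R
  = m.+1`!%:R * l`!%:R * k`!%:R / (l + k).+1`!%:R :> rat.
Proof.
case: l => [|l] /=.
  rewrite !add0n !factS fact0 !natrM !mulr0 subr0 !mulr1.
  field; nz.
rewrite addSn !factS !natrM.
field; nz.
Qed.
Section Cnt.
Variable X : eqType.

Definition cnt (s : seq X) (P : pred (seq X)) : rat :=
  \sum_(t <- permutations s) (P t)%:R.

Lemma cnt_rec s P : uniq s -> (0 < size s)%N ->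
  cnt s P = \sum_(x <- s) cnt (rem x s) (fun t => P (x :: t)).
Proof.
move=> Us Ps; rewrite /cnt (perm_big _ (permutationsE Ps)) /=.
by rewrite big_allpairs_dep undup_id.
Qed.

Lemma cnt_predT s : uniq s -> cnt s predT = (size s)`!%:R.
Proof.
move=> Us; rewrite /cnt (eq_bigr (fun _ => 1%:R)) // -natr_sum sum1_size.
by rewrite size_permutations.
Qed.

Lemma eq_cnt s P Q : (forall t, perm_eq t s -> P t = Q t) -> cnt s P = cnt s Q.
Proof.
move=> PQ; rewrite /cnt big_seq_cond [RHS]big_seq_cond; apply: eq_bigr => t.
by rewrite andbT mem_permutations => /PQ ->.
Qed.

End Cnt.
Section Bef.
Variable X : eqType.

Definition bef (f : X) (L A : seq X) (s : seq X) : bool :=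
  all (fun g => index g s < index f s)%N L && all (fun g => index f s < index g s)%N A.

Lemma sum_mem (s0 L : seq X) : uniq s0 -> uniq L -> {subset L <= s0} ->
  \sum_(x <- s0) (x \in L)%:R = (size L)%:R :> rat.
Proof.
move=> U0 UL sub; rewrite -natr_sum; congr (_%:R).
rewrite -[RHS](_ : count (mem L) s0 = _).
  by rewrite -sum1_count [RHS]big_mkcond /=; apply: eq_bigr => x _; case: (x \in L).
rewrite -size_filter; apply/perm_size/uniq_perm; first exact: filter_uniq.
  exact: UL.
by move=> x; rewrite mem_filter andb_idr //; apply: sub.
Qed.

Lemma all_rem (L : seq X) x (Q1 Q2 : pred X) : uniq L -> Q1 x ->
  (forall g, g \in L -> g != x -> Q1 g = Q2 g) -> all Q1 L = all Q2 (rem x L).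
Proof.
move=> UL Qx QQ; rewrite rem_filter // all_filter.
apply: eq_in_all => g gL /=; case: eqP => [->|/eqP gx] //=.
by rewrite QQ.
Qed.

Lemma cnt_bef m : forall (s0 : seq X) f L A, size s0 = m -> uniq s0 ->
  uniq (f :: L ++ A) -> {subset f :: L ++ A <= s0} ->
  cnt s0 (bef f L A) =
  m`!%:R * (size L)`!%:R * (size A)`!%:R / (size L + size A).+1`!%:R.
Proof.
elim: m => [|m IH] s0 f L A Sz U0 UfLA sub.
  by move: (sub f (mem_head _ _)); case: s0 Sz U0 sub.
rewrite cnt_rec // ?Sz //.
move: (UfLA); rewrite /= mem_cat negb_or cat_uniq => /and4P[/andP[fL fA] UL LA UA].
pose c : rat := m`!%:R * (size L)`!%:R * (size A)`!%:R / (size L + size A).+1`!%:R.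
pose b : rat := m`!%:R * (size L).-1`!%:R * (size A)`!%:R / ((size L).-1 + size A).+1`!%:R.
pose a : rat := if size L == 0%N then m`!%:R else 0.
have -> : \sum_(x <- s0) cnt (rem x s0) (fun t => bef f L A (x :: t)) =
  \sum_(x <- s0) ((x == f)%:R * (a - c) + (x \in L)%:R * (b - c) - (x \in A)%:R * c + c).
  rewrite big_seq [RHS]big_seq; apply: eq_bigr => x xs.
  have Ur : uniq (rem x s0) by exact: rem_uniq.
  have Szr : size (rem x s0) = m by rewrite size_rem // Sz.
  have cnt0 : forall s : seq X, cnt s (fun _ => false) = 0.
    by move=> s; rewrite /cnt big1.
  have icn : forall (g : X) t, x != g -> index g (x :: t) = (index g t).+1.
    by move=> g t xg; rewrite /= (negbTE xg).
  have ic0 : forall t, index x (x :: t) = 0%N by move=> t; rewrite /= eqxx.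
  case: (eqVneq x f) => [xf|xf].
    subst x; rewrite (negbTE fL) (negbTE fA) /= !mul0r !mul1r subr0 addr0 subrK.
    rewrite /a; case: L {c b a IH sub UfLA} fL UL LA => [|g L'] /= _ _ _.
      rewrite (eq_cnt (Q := predT)); first by rewrite cnt_predT // Szr.
      move=> t _; rewrite /bef ic0 /=; apply/allP => g gA /=.
      by case: eqP => // fg; subst g; rewrite gA in fA.
    by rewrite (eq_cnt (Q := fun _ => false)) ?cnt0 // => t _; rewrite /bef ic0.
  case xL: (x \in L).
    have xA : x \notin A by apply: contraNN LA => xA; apply/hasP; exists x.
    rewrite (negbTE xA) /= mul0r mul1r mul0r subr0 add0r subrK.
    rewrite (eq_cnt (Q := bef f (rem x L) A)); last first.
      move=> t _; rewrite /bef (icn f t xf).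
      congr (_ && _).
        by apply: all_rem => // [|g gL gx]; rewrite ?ic0 // icn 1?eq_sym.
      apply: eq_in_all => g gA; rewrite icn ?ltnS //.
      by apply: contraNneq xA => ->.
    rewrite IH //.
    - rewrite /b size_rem //.
    - have mr := mem_rem_uniq x UL.
      rewrite /= mem_cat mr inE (negbTE fL) andbF fA cat_uniq rem_uniq //= UA andbT.
      apply: contra LA => /hasP[y yA]; rewrite mr => /andP[_ yL]; apply/hasP; by exists y.
    - have mr := mem_rem_uniq x UL.
      move=> y; rewrite (mem_rem_uniq _ U0) inE => yin; apply/andP; split.
        move: yin; rewrite mem_cat mr inE => /or3P[/eqP->|/andP[]//|yA]; first by rewrite eq_sym.
        by apply: contraNneq xA => <-.
      apply: sub; move: yin; rewrite !inE !mem_cat mr !inE => /or3P[->|/andP[_ ->]|->]; rewrite ?orbT //.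
  case xA: (x \in A).
    rewrite /= mul0r mul0r subr0 add0r mul1r addNr.
    rewrite (eq_cnt (Q := fun _ => false)) ?cnt0 // => t _; rewrite /bef.
    apply/negbTE/negP => /andP[_ /allP /(_ x xA)]; by rewrite ic0.
  rewrite /= !mul0r subr0 !add0r.
  rewrite (eq_cnt (Q := bef f L A)); last first.
    move=> t _; rewrite /bef (icn f t xf); congr (_ && _).
      apply: eq_in_all => g gL; rewrite icn //.
      by apply: contraTneq gL => <-; rewrite xL.
    apply: eq_in_all => g gA; rewrite icn //.
    by apply: contraTneq gA => <-; rewrite xA.
  rewrite IH //.
  move=> y yin; rewrite (mem_rem_uniq _ U0) inE (sub y yin) andbT.
  move: yin; rewrite inE mem_cat => /or3P[/eqP->|yL|yA]; first by rewrite eq_sym.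
    by apply: contraTneq yL => ->; rewrite xL.
  by apply: contraTneq yA => ->; rewrite xA.
rewrite !big_split /= sumrN -!mulr_suml.
have subL : {subset L <= s0} by move=> x xL; apply: sub; rewrite inE mem_cat xL orbT.
have subA : {subset A <= s0} by move=> x xA; apply: sub; rewrite inE mem_cat xA !orbT.
have subf : {subset [:: f] <= s0} by move=> x; rewrite inE => /eqP->; apply: sub; rewrite mem_head.
rewrite (sum_mem U0 UL subL) (sum_mem U0 UA subA).
rewrite (eq_bigr (fun i => (i \in [:: f])%:R)); last by move=> i _; rewrite inE.
rewrite (sum_mem U0 _ subf) //.
rewrite big_const_seq count_predT Sz iter_addr_0.
rewrite -factor_id /a /b /c /=. move: (if _ then _ else _) => aa. ring.
Qed.
End Bef.
Section G.
Variables (T : finType) (e : rel T).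

Definition pre (s : seq {set T}) k : {set {set T}} := [set g | g \in take k s].
Definition tau (s : seq {set T}) : nat :=
  find (fun k => covers (pre s k)) (iota 0 (size s).+1).

Lemma size_codom_o (o : {ffun 'I_#|edges e| -> {set T}}) : size (codom o) = #|edges e|.
Proof. by rewrite size_codom card_ord. Qed.

Lemma prefix_pre (o : {ffun 'I_#|edges e| -> {set T}}) k : Defs.prefix o k = pre (codom o) k.
Proof.
apply/setP => g; rewrite /Defs.prefix /pre inE; apply/imsetP/idP.
  move=> [i]; rewrite inE => ik ->.
  rewrite -(nth_fgraph_ord set0) -codom_ffun -(nth_take _ ik); apply: mem_nth.
  rewrite size_take size_codom_o; case: ifP => //.
move=> gin; have gs : g \in codom o by apply: mem_take gin.
have ilt : (index g (codom o) < #|edges e|)%N.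
  by have := index_mem g (codom o); rewrite gs size_codom_o.
exists (Ordinal ilt); first by rewrite inE /= -in_take.
by rewrite -(nth_fgraph_ord set0) -codom_ffun /= nth_index.
Qed.

Lemma Gomega_pre (o : {ffun 'I_#|edges e| -> {set T}}) : G_omega o = pre (codom o) (tau (codom o)).
Proof.
rewrite /G_omega /stop_index /tau size_codom_o prefix_pre; congr pre.
by apply: eq_find => k; rewrite prefix_pre.
Qed.

Lemma sum_orderings (F : seq {set T} -> rat) :
  \sum_(o in orderings e) F (codom o) =
  \sum_(s <- permutations (enum (edges e))) F s.
Proof.
pose h := fun o : {ffun 'I_#|edges e| -> {set T}} => codom o.
rewrite -big_enum /= -(big_map h xpredT F).
apply: perm_big; apply: uniq_perm; last 1 first.
- move=> s; rewrite mem_permutations; apply/mapP/idP.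
    move=> [o]; rewrite mem_enum inE => /andP[inj /forallP inE_] ->.
    have U : uniq (h o) by move: inj; rewrite /h codomE.
    have sub : {subset h o <= enum (edges e)}.
      by move=> g /codomP[i ->]; rewrite mem_enum.
    have [_ eqs] : (size (h o) = size (enum (edges e))) * (h o =i enum (edges e)).
      by apply: uniq_min_size => //; rewrite /h size_codom_o -cardE.
    by apply: uniq_perm => //; apply: enum_uniq.
  move=> ps.
  have Us : uniq s by rewrite (perm_uniq ps) enum_uniq.
  have Sz : size s = #|edges e| by rewrite (perm_size ps) -cardE.
  pose o := [ffun i : 'I_#|edges e| => nth set0 s i].
  have ho : h o = s.
    apply: (@eq_from_nth _ set0); first by rewrite /h size_codom_o Sz.
    move=> i; rewrite /h size_codom_o => ilt.
    by rewrite codom_ffun (nth_fgraph_ord set0 (Ordinal ilt)) ffunE.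
  exists o => //; rewrite mem_enum inE; apply/andP; split.
    apply/injectiveP => i j; rewrite !ffunE => /eqP.
    by rewrite nth_uniq ?Sz // => /eqP /val_inj.
  apply/forallP => i; rewrite ffunE -mem_enum -(perm_mem ps) mem_nth // Sz.
  exact: ltn_ord.
- rewrite map_inj_in_uniq ?enum_uniq // => o1 o2 _ _ H.
  apply/ffunP => i.
  by rewrite -!(nth_fgraph_ord set0) -!codom_ffun; move: H; rewrite /h => ->.
- exact: permutations_uniq.
Qed.

End G.
Section GF.
Variables (T : finType) (e : rel T) (n d : nat).
Hypothesis sg : simple_graph e.
Hypothesis cardT : #|T| = (2 * n)%N.
Hypothesis reg : regular e d.
Variable M : {set {set T}}.
Hypothesis pmM : perfect_matching e M.

Lemma edgesP g : reflect (exists x y, e x y /\ g = [set x; y]) (g \in edges e).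
Proof.
apply: (iffP imset2P) => [[x y _]|[x [y [exy ->]]]].
  by rewrite inE => exy ->; exists x, y.
by exists x y => //; rewrite inE.
Qed.

Lemma edge_neq x y : e x y -> x != y.
Proof. by case: sg => _ irr exy; apply: contraTneq exy => ->; rewrite irr. Qed.

Lemma M_sub : M \subset edges e.
Proof. by case/andP: pmM. Qed.

Lemma M_uniq x : exists2 f, f \in M & forall g, (g \in M) && (x \in g) = (g == f).
Proof.
case/andP: pmM => _ /forallP /(_ x) /cards1P [f0 Hf].
exists f0.
  have : f0 \in [set f in M | x \in f] by rewrite Hf set11.
  by rewrite inE => /andP[].
move=> g; have := congr1 (fun S : {set {set T}} => g \in S) Hf.
by rewrite /= !inE.
Qed.

Lemma card_edge g : g \in edges e -> #|g| = 2%N.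
Proof. by case/edgesP => x [y [exy ->]]; rewrite cards2 edge_neq. Qed.

Lemma card_M : #|M| = n.
Proof.
have H1 : (\sum_(x : T) #|[set f in M | x \in f]| = 2 * n)%N.
  rewrite -cardT -sum1_card; apply: eq_bigr => x _.
  by case/andP: pmM => _ /forallP /(_ x) /eqP.
have H2 : (\sum_(x : T) #|[set f in M | x \in f]| = \sum_(f in M) #|f|)%N.
  transitivity (\sum_(x : T) \sum_(f in M) (x \in f))%N.
    apply: eq_bigr => x _; rewrite -sum1_card big_mkcond [RHS]big_mkcond /=.
    by apply: eq_bigr => f _; rewrite inE; case: (f \in M); case: (x \in f).
  rewrite exchange_big /=; apply: eq_bigr => f _.
  by rewrite -sum1_card [RHS]big_mkcond /=; apply: eq_bigr => x _; case: (x \in f).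
have H3 : (\sum_(f in M) #|f| = 2 * #|M|)%N.
  rewrite -sum1_card big_distrr /=; apply: eq_bigr => f fM.
  by rewrite muln1 card_edge //; apply: (subsetP M_sub).
by apply/eqP; rewrite -(eqn_pmul2l (isT : 0 < 2)%N) -H3 -H2 H1.
Qed.


Definition inc x : {set {set T}} := [set g in edges e | x \in g].
Definition Ax x f := inc x :\ f.
Lemma sym_e : symmetric e. Proof. by case: sg. Qed.
Lemma card_inc x : #|inc x| = d.
Proof.
have -> : inc x = [set [set x; y] | y in [set y | e x y]].
  apply/setP => g; rewrite [in LHS]inE; apply/andP/imsetP.
    move=> [/edgesP [a [b [eab ->]]]]; rewrite !inE => /orP[]/eqP->.
      exists b; first by rewrite inE.
      by [].
    exists a; first by rewrite inE sym_e.
    by rewrite setUC.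
  move=> [y]; rewrite inE => exy ->; split; last by rewrite set21.
  by apply/edgesP; exists x, y.
rewrite card_in_imset; first by apply: reg.
move=> y1 y2; rewrite !inE => e1 e2 H.
have : y1 \in [set x; y2] by rewrite -H set22.
rewrite !inE => /orP[/eqP y1x|/eqP //].
by move: (edge_neq e1); rewrite y1x eqxx.
Qed.

Lemma card_Ax x f : f \in M -> x \in f -> #|Ax x f| = d.-1.
Proof.
move=> fM xf; have fi : f \in inc x by rewrite inE xf andbT (subsetP M_sub).
by rewrite /Ax -(card_inc x) (cardsD1 f (inc x)) fi.
Qed.

Lemma card_MD1 f : f \in M -> #|M :\ f| = n.-1.
Proof. by move=> fM; rewrite -card_M (cardsD1 f M) fM. Qed.

Lemma Ax_M x f g : f \in M -> x \in f -> g \in Ax x f -> g \in M -> False.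
Proof.
move=> fM xf; rewrite !inE => /andP[gf /andP[_ xg]] gM.
have [f0 _ H] := M_uniq x.
move: (H g) (H f); rewrite gM xg fM xf => /esym/eqP gf0 /esym/eqP ff0.
by move: gf; rewrite gf0 ff0 eqxx.
Qed.

Lemma Ax_uv u v g : e u v -> g \in Ax u [set u; v] -> g \in Ax v [set u; v] -> False.
Proof.
move=> euv; rewrite !inE => /andP[gf /andP[gE ug]] /andP[_ /andP[_ vg]].
suff : [set u; v] == g by rewrite eq_sym (negbTE gf).
rewrite eqEcard card_edge // cards2 edge_neq // andbT.
by apply/subsetP => y; rewrite !inE => /orP[]/eqP->.
Qed.


Definition PF (f : {set T}) (s : seq {set T}) := [exists x in f, bef f (enum (M :\ f)) (enum (Ax x f)) s].

Lemma per_f f : f \in M ->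
  \sum_(s <- permutations (enum (edges e))) (PF f s)%:R =
  #|edges e|`!%:R * (2 * ((n.-1)`!%:R * (d.-1)`!%:R / (n.-1 + d.-1).+1`!%:R)
    - (n.-1)`!%:R * (d.-1 + d.-1)`!%:R / (n.-1 + (d.-1 + d.-1)).+1`!%:R) :> rat.
Proof.
move=> fM; have fE : f \in edges e by apply: (subsetP M_sub).
have /edgesP [u [v [euv fuv]]] := fE.
have uf : u \in f by rewrite fuv set21.
have vf : v \in f by rewrite fuv set22.
set L := enum (M :\ f).
set Au := enum (Ax u f); set Av := enum (Ax v f).
have key : forall s, (PF f s)%:R = (bef f L Au s)%:R + (bef f L Av s)%:R
    - (bef f L (Au ++ Av) s)%:R :> rat.
  move=> s; have -> : PF f s = bef f L Au s || bef f L Av s.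
    rewrite /PF; apply/existsP/orP.
      move=> [x /andP[]]; rewrite {1}fuv !inE => /orP[]/eqP-> H; [left|right]; exact: H.
    by move=> [H|H]; [exists u | exists v]; rewrite H andbT.
  have -> : bef f L (Au ++ Av) s = bef f L Au s && bef f L Av s.
    by rewrite /bef all_cat; case: (all _ L); case: (all _ Au).
  by case: (bef f L Au s); case: (bef f L Av s);
    rewrite /= ?(addr0, add0r, subr0, subrr, addrK).
rewrite (eq_bigr _ (fun s _ => key s)) !big_split /= sumrN.
have fL : f \notin L by rewrite /L mem_enum !inE eqxx.
have LE : {subset L <= edges e}.
  by move=> g; rewrite /L mem_enum !inE => /andP[_ /(subsetP M_sub)].
have cb : forall A, uniq (f :: L ++ A) -> {subset A <= edges e} ->
    \sum_(s <- permutations (enum (edges e))) (bef f L A s)%:R =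
    #|edges e|`!%:R * (size L)`!%:R * (size A)`!%:R / (size L + size A).+1`!%:R :> rat.
  move=> A UA AE; have := cnt_bef (m := #|edges e|) (s0 := enum (edges e)) (f := f) (L := L) (A := A).
  rewrite /cnt => -> //.
  - by rewrite -cardE.
  - exact: enum_uniq.
  move=> g; rewrite inE mem_cat mem_enum => /or3P[/eqP->|/LE|/AE] //.
have AuE : {subset Au <= edges e}.
  by move=> g; rewrite /Au /Av mem_enum !inE => /andP[_ /andP[]].
have AvE : {subset Av <= edges e}.
  by move=> g; rewrite /Au /Av mem_enum !inE => /andP[_ /andP[]].
have disjL : forall x A, x \in f -> {subset A <= Ax x f} -> ~~ has (mem L) A.
  move=> x A xf sub; apply/hasPn => g /sub gA; rewrite -[mem L g]/(g \in L) /L mem_enum.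
  apply/negP; rewrite inE => /andP[_ gM]; exact: (Ax_M fM xf gA gM).
have fA : forall x, f \notin enum (Ax x f) by move=> x; rewrite mem_enum !inE eqxx.
rewrite !cb //.
- rewrite /L /Au /Av size_cat -!cardE card_MD1 // !card_Ax //.
  ring.
- rewrite /= mem_cat negb_or fL mem_cat negb_or !fA /= cat_uniq enum_uniq /=.
  have dLu : ~~ has (mem L) Au by apply: (disjL u) => // g; rewrite /Au mem_enum.
  have dLv : ~~ has (mem L) Av by apply: (disjL v) => // g; rewrite /Av mem_enum.
  rewrite cat_uniq !enum_uniq /= andbT has_cat negb_or dLu dLv /=.
  apply/hasPn => g; rewrite /Au /Av !mem_enum => gv.
  by apply/negP => gu; move: gu gv; rewrite fuv; apply: Ax_uv.
- move=> g; rewrite mem_cat => /orP[/AuE|/AvE] //.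
- rewrite /= mem_cat negb_or fL fA /= cat_uniq !enum_uniq /= andbT.
  by apply: (disjL v) => // g; rewrite /Av mem_enum.
- rewrite /= mem_cat negb_or fL fA /= cat_uniq !enum_uniq /= andbT.
  by apply: (disjL u) => // g; rewrite /Au mem_enum.
Qed.


Lemma pre_mem (s : seq {set T}) k (g : {set T}) : (g \in pre s k) = (g \in s) && (index g s < k)%N.
Proof.
rewrite /pre inE; case gs: (g \in s); first by rewrite in_take.
by apply/negbTE; apply: contraFN gs => /mem_take.
Qed.

Lemma per_s (s : seq {set T}) : perm_eq s (enum (edges e)) -> M != set0 ->
  (M \subset pre s (tau s))%:R = \sum_(f in M) (PF f s)%:R :> rat.
Proof.
move=> ps M0.
have Us : uniq s by rewrite (perm_uniq ps) enum_uniq.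
have ms : forall g, (g \in s) = (g \in edges e) by move=> g; rewrite (perm_mem ps) mem_enum.
have /set0Pn [f0 f0M] := M0.
case: (@arg_maxnP _ f0 (mem M) (fun f => index f s) f0M) => fs fsM fsmax.
have {}fsM : fs \in M := fsM.
have MS : forall g, g \in M -> g \in s by move=> g gM; rewrite ms (subsetP M_sub).
have lst : forall g, g \in M -> g != fs -> (index g s < index fs s)%N.
  move=> g gM gfs; have le : (index g s <= index fs s)%N := fsmax g gM.
  rewrite ltn_neqAle le andbT.
  by apply: contra gfs => /eqP/index_inj -> //; rewrite MS.
rewrite (bigD1 fs fsM) /= big1 ?addr0; last first.
  move=> f /andP[fM ffs]; suff -> : PF f s = false by [].
  apply/negbTE/negP => /existsP [x /andP[_ /andP[/allP H _]]].
  have : fs \in enum (M :\ f) by rewrite mem_enum !inE fsM eq_sym ffs.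
  move/H; rewrite ltnNge => /negP; apply; apply: ltnW; exact: lst.
congr (_%:R); congr (nat_of_bool _).
have -> : PF fs s = [exists x in fs,
    all (fun g => index fs s < index g s)%N (enum (Ax x fs))].
  rewrite /PF /bef; apply: eq_existsb => x; congr (_ && _).
  suff -> : all (fun g => index g s < index fs s)%N (enum (M :\ fs)) by [].
  by apply/allP => g; rewrite mem_enum !inE => /andP[gfs gM]; apply: lst.
set j := index fs s.
set P := fun k => covers (pre s k).
have mono : forall k k', (k <= k')%N -> P k -> P k'.
  move=> k k' kk /forallP H; apply/forallP => x; have /existsP [g /andP[gp xg]] := H x.
  apply/existsP; exists g; rewrite xg andbT; move: gp; rewrite !pre_mem => /andP[-> /leq_trans]; exact.
have Pm : P (size s).
  apply/forallP => x; have [fx fxM Hfx] := M_uniq x.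
  apply/existsP; exists fx; rewrite pre_mem MS // index_mem MS //=.
  by have := Hfx fx; rewrite eqxx fxM.
have hasPs : has P (iota 0 (size s).+1).
  apply/hasP; exists (size s); last exact: Pm.
  by rewrite mem_iota add0n ltnSn.
have tault : (tau s < (size s).+1)%N by rewrite /tau -[X in (_ < X)%N](size_iota 0) -has_find hasPs.
have Ptau : P (tau s).
  by have := nth_find 0 hasPs; rewrite nth_iota.
have Pbef : forall k, (k < tau s)%N -> ~~ P k.
  move=> k kt; have kl : (k < (size s).+1)%N := ltn_trans kt tault.
  have := before_find 0 kt; rewrite nth_iota // add0n.
  by rewrite /P => ->.
have -> : (M \subset pre s (tau s)) = (j < tau s)%N.
  apply/subsetP/idP => [H|jt g gM].
    by have := H fs fsM; rewrite pre_mem => /andP[].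
  rewrite pre_mem MS //=; case: (eqVneq g fs) => [->//|gfs].
  exact: ltn_trans (lst g gM gfs) jt.
have -> : (j < tau s)%N = ~~ P j.
  apply/idP/idP => [|nP]; first exact: Pbef.
  rewrite ltnNge; apply: contra nP => tj; exact: mono tj Ptau.
rewrite /P /covers negb_forall; apply/idP/idP => [/existsP [x Hx]|/existsP [x /andP[xfs Hall]]].
  have [fx fxM Hfx] := M_uniq x.
  have xfx : x \in fx by have := Hfx fx; rewrite eqxx fxM.
  have fxfs : fx = fs.
    apply/eqP; apply/negPn/negP => ne; move/negP: Hx; apply; apply/existsP.
    by exists fx; rewrite xfx andbT pre_mem MS //=; apply: lst.
  subst fx; apply/existsP; exists x; rewrite xfx /=; apply/allP => g.
  rewrite mem_enum !inE => /andP[gfs /andP[gE xg]].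
  rewrite ltnNge; apply/negP => le; apply: (negP Hx); apply/existsP.
  exists g; rewrite xg andbT pre_mem ms gE /= ltn_neqAle le andbT.
  have gs : g \in s by rewrite ms.
  by apply/negP => /eqP H; move: gfs; rewrite (index_inj g gs (MS fs fsM) H) eqxx.
apply/existsP; exists x; apply/negP => /existsP [g /andP[gp xg]]; move: gp; rewrite pre_mem ms => /andP[gE gj].
have gfs : g != fs by apply: contraTneq gj => ->; rewrite ltnn.
have : g \in enum (Ax x fs) by rewrite mem_enum !inE gfs gE xg.
by move/(allP Hall); rewrite ltnNge ltnW.
Qed.


Lemma binq a b : ('C(a + b, a))%:R = (a + b)`!%:R / (a`!%:R * b`!%:R) :> rat.
Proof.
have := bin_fact (leq_addr b a); rewrite addKn => H.
by rewrite -H -[X in _ / X]natrM natrM mulfK // pnatr_eq0 muln_eq0 negb_or -!lt0n !fact_gt0.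
Qed.

Lemma final_arith :
  (1 <= d)%N -> (1 <= n)%N ->
  n%:R * (2 * ((n.-1)`!%:R * (d.-1)`!%:R / (n.-1 + d.-1).+1`!%:R)
    - (n.-1)`!%:R * (d.-1 + d.-1)`!%:R / (n.-1 + (d.-1 + d.-1)).+1`!%:R)
  = 2 / ('C(n + d - 1, n))%:R - 1 / ('C(n + 2 * d - 2, n))%:R :> rat.
Proof.
case: d => [//|d'] _; case: n => [//|n'] _ /=.
have -> : (n'.+1 + d'.+1 - 1 = n'.+1 + d')%N by lia.
have -> : (n'.+1 + 2 * d'.+1 - 2 = n'.+1 + (d' + d'))%N by lia.
rewrite !binq !addSn !factS !natrM.
field; nz.
Qed.

Lemma per_M : (1 <= d)%N ->
  \sum_(o in orderings e) (M \subset G_omega o)%:R =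
  #|edges e|`!%:R * (2 / ('C(n + d - 1, n))%:R - 1 / ('C(n + 2 * d - 2, n))%:R) :> rat.
Proof.
move=> d1.
rewrite (eq_bigr (fun o : {ffun 'I_#|edges e| -> {set T}} => (M \subset pre (codom o) (tau (codom o)))%:R)); last first.
  by move=> o _; rewrite Gomega_pre.
rewrite (sum_orderings e (fun s : seq {set T} => (M \subset pre s (tau s))%:R)).
have sizeP : size (permutations (enum (edges e))) = #|edges e|`!.
  by rewrite size_permutations ?enum_uniq // -cardE.
case: (eqVneq M set0) => [M0|M0].
  have n0 : n = 0%N by rewrite -card_M M0 cards0.
  rewrite (eq_bigr (fun _ => (1%N)%:R)); last by move=> s _; rewrite M0 sub0set.
  rewrite -natr_sum sum1_size sizeP n0 add0n !bin0 !divr1.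
  by [].
rewrite big_seq (eq_bigr (fun s => \sum_(f in M) (PF f s)%:R)); last first.
  by move=> s; rewrite mem_permutations => ps; apply: per_s.
rewrite exchange_big /=.
rewrite (eq_bigr (fun f => #|edges e|`!%:R * (2 * ((n.-1)`!%:R * (d.-1)`!%:R / (n.-1 + d.-1).+1`!%:R)
    - (n.-1)`!%:R * (d.-1 + d.-1)`!%:R / (n.-1 + (d.-1 + d.-1)).+1`!%:R))); last first.
  by move=> f fM; rewrite -big_seq per_f.
rewrite sumr_const card_M -final_arith //; last first.
  by rewrite -card_M card_gt0.
rewrite -mulr_natl; ring.
Qed.

End GF.

Lemma card_cond (X : finType) (A : {set X}) (P : pred X) :
  (#|[set x in A | P x]|%:R : rat) = \sum_(x in A) (P x)%:R.
Proof.
rewrite -sum1_card natr_sum big_mkcond [RHS]big_mkcond /=.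
by apply: eq_bigr => x _; rewrite inE; case: (x \in A); case: (P x).
Qed.

Local Close Scope ring_scope.
Unset Implicit Arguments.

Theorem corollary2 (T : finType) (e : rel T) (n d : nat) :
  simple_graph e ->
  #|T| = (2 * n)%N ->
  (1 <= d)%N ->
  regular e d ->
  perfect_matchings e != set0 ->
  expected_pm_fraction e =
    (2 / ('C(n + d - 1, n))%:R - 1 / ('C(n + 2 * d - 2, n))%:R)%R.
Proof.
move=> sg cT d1 reg PM0.
set F := (2 / _ - _)%R.
have cardO : (#|orderings e|%:R : rat) = (#|edges e|`!%:R)%R.
  have := sum_orderings e (fun _ => 1%R).
  rewrite sumr_const (eq_bigr (fun _ => (1%N)%:R%R)) // -natr_sum sum1_size.
  rewrite size_permutations ?enum_uniq // -cardE => <-.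
  by rewrite -mulr_natl mulr1.
have mf : (#|edges e|`!%:R : rat) != 0%R by rewrite pnatr_eq0 -lt0n fact_gt0.
have pf : (#|perfect_matchings e|%:R : rat) != 0%R.
  by rewrite pnatr_eq0 -lt0n card_gt0.
rewrite /expected_pm_fraction /pm_fraction.
under eq_bigr => o _ do rewrite card_cond.
rewrite -mulr_suml exchange_big /=.
rewrite (eq_bigr (fun _ => (#|edges e|`!%:R * F)%R)); last first.
  move=> M; rewrite inE => pmM.
  exact: (per_M sg cT reg pmM d1).
rewrite sumr_const cardO -mulr_natr.
field.
by rewrite mf pf.
Qed.
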